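(* Let $\mathcal{E}$ be a finite-dimensional complex regular evolution algebra of dimension greater than one. Then $\mathcal{E}$ is not complete.
   Context: An evolution algebra over $\mathbb{C}$ is a $\mathbb{C}$-algebra $\mathcal{E}$ admitting a basis $\{e_1,\dots,e_n\}$ (a natural basis) such that $e_ie_j=0$ for all $i\neq j$. $\mathcal{E}$ is regular (perfect) if $\mathcal{E}=\mathcal{E}^2$, equivalently the structure matrix $(a_{ij})$ defined by $e_i^2=\sum_j a_{ij}e_j$ (relative to any natural basis) is invertible. $\mathcal{E}$ is complete if every subalgebra of $\mathcal{E}$ admits a natural basis (i.e. a basis whose distinct elements have zero product) which can be extended to a natural basis of $\mathcal{E}$. *)

(* Defs.v *)
From HB Require Import structures.
From mathcomp Require Import all_boot all_order all_algebra.
From mathcomp Require Import complex.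
From mathcomp Require Import reals.
Set Implicit Arguments. Unset Strict Implicit. Unset Printing Implicit Defensive.
Import Order.TTheory GRing.Theory Num.Theory.
Local Open Scope ring_scope.


Section EvolutionAlgebras.
Variables (K : fieldType) (V : vectType K).

Definition bilinear_mul (mul : V -> V -> V) : Prop :=
  (forall (a : K) (x y z : V), mul (a *: x + y) z = a *: mul x z + mul y z) /\
  (forall (a : K) (x y z : V), mul x (a *: y + z) = a *: mul x y + mul x z).

Definition natural_family (mul : V -> V -> V) (s : seq V) : Prop :=
  forall i j, (i < size s)%N -> (j < size s)%N -> i != j ->
    mul (nth 0 s i) (nth 0 s j) = 0.

Definition natural_basis (mul : V -> V -> V) (s : seq V) : Prop :=
  basis_of fullv%VS s /\ natural_family mul s.

Definition evolution_algebra (mul : V -> V -> V) : Prop :=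
  bilinear_mul mul /\ exists s, natural_basis mul s.

(** E = E^2 : the only subspace containing all products is E itself
    (E^2 is the subspace spanned by all products). *)
Definition regular (mul : V -> V -> V) : Prop :=
  forall U : {vspace V}, (forall x y, mul x y \in U) -> U = fullv.

Definition subalgebra (mul : V -> V -> V) (U : {vspace V}) : Prop :=
  forall x y, x \in U -> y \in U -> mul x y \in U.

Definition complete (mul : V -> V -> V) : Prop :=
  forall U : {vspace V}, subalgebra mul U ->
    exists s, [/\ basis_of U s, natural_family mul s &
      exists s', natural_basis mul s' /\ {subset s <= s'}].

End EvolutionAlgebras.

(* Main.v *)
Require Import Defs.
From HB Require Import structures.
From mathcomp Require Import all_boot all_order all_algebra.
From mathcomp Require Import complex.
From mathcomp Require Import reals.
From mathcomp Require Import ring.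
From Stdlib Require Import Classical.
Import GRing.Theory Num.Theory.
Local Open Scope ring_scope.
Set Implicit Arguments. Unset Strict Implicit. Unset Printing Implicit Defensive.

Section Construct.
Variables (C : fieldType) (I : finType) (b : I -> I -> C).

Local Notation N := #|{: {set I}}|.

Definition eS (S : {set I}) : 'rV[C]_N := delta_mx 0 (enum_rank S).

Fixpoint mb (k : nat) (i : I) (S : {set I}) : 'rV[C]_N :=
  if k is k'.+1 then
    (if i \in S then \sum_j b i j *: mb k' j (S :\ i) else eS (i |: S))
  else 0.

Lemma mb_fuel k k' i (S : {set I}) : (#|S| < k)%N -> (#|S| < k')%N -> mb k i S = mb k' i S.
Proof.
elim: k k' i S => [|k IH] [|k'] i S //= hk hk'.
case: ifP => // iS; apply: eq_bigr => j _; congr (_ *: _); apply: IH.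
  by move: hk; rewrite (cardsD1 i S) iS.
by move: hk'; rewrite (cardsD1 i S) iS.
Qed.

Definition M i (S : {set I}) := mb #|S|.+1 i S.

Lemma ME i (S : {set I}) : M i S =
  if i \in S then \sum_j b i j *: M j (S :\ i) else eS (i |: S).
Proof.
rewrite {1}/M [LHS]/=; case: ifP => // iS; apply: eq_bigr => j _; congr (_ *: _).
rewrite /M; apply: mb_fuel => //; by rewrite (cardsD1 i S) iS.
Qed.

Definition Mm i : 'M[C]_N := \matrix_(p, q) M i (enum_val p) 0 q.

Lemma eSM S i : eS S *m Mm i = M i S.
Proof.
by rewrite /eS -rowE; apply/rowP => q; rewrite !mxE enum_rankK.
Qed.

Lemma eqM (A B : 'M[C]_N) : (forall S, eS S *m A = eS S *m B) -> A = B.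
Proof.
move=> h; apply/row_matrixP => p; rewrite !rowE.
by have := h (enum_val p); rewrite /eS enum_valK.
Qed.

Lemma sum_mul (X : I -> 'rV[C]_N) (c : I -> C) (A : 'M[C]_N) :
  (\sum_k c k *: X k) *m A = \sum_k c k *: (X k *m A).
Proof. by rewrite mulmx_suml; apply: eq_bigr => k _; rewrite scalemxAl. Qed.

Lemma commS (S : {set I}) i j : M i S *m Mm j = M j S *m Mm i.
Proof.
move: i j; have [n] := ubnP #|S|; elim: n S => // n IH S ltS.
have hb : forall i j, i \in S -> j \notin S -> M i S *m Mm j = M j S *m Mm i.
  move=> i j iS jS.
  have ij : i != j by apply: contraNneq jS => <-.
  have lt1 : (#|S :\ i| < n)%N.
    by move: ltS; rewrite (cardsD1 i S) iS.
  rewrite [M i S]ME iS sum_mul [M j S]ME (negbTE jS) eSM ME in_setU iS orbT.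
  apply: eq_bigr => k _; congr (_ *: _).
  rewrite IH // ME !inE (negbTE jS) andbF eSM; congr (M k _).
  apply/setP => x; rewrite !inE; case: (eqVneq x j) => // ->.
  by rewrite eq_sym ij.
move=> i j; case: (eqVneq i j) => [->//|ij].
case iS: (i \in S); case jS: (j \in S).
- have lt1 : (#|S :\ i| < n)%N by move: ltS; rewrite (cardsD1 i S) iS.
  have lt2 : (#|S :\ j| < n)%N by move: ltS; rewrite (cardsD1 j S) jS.
  have lt3 : (#|S :\ i :\ j| < n)%N.
    by apply: leq_ltn_trans lt1; apply: subset_leq_card; apply: subD1set.
  rewrite [M i S]ME [M j S]ME iS jS !sum_mul.
  under eq_bigr => k _ do rewrite IH // [M j _]ME !inE eq_sym ij jS sum_mul.
  under [RHS]eq_bigr => k _ do rewrite IH // [M i _]ME !inE ij iS sum_mul.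
  under eq_bigr => k _ do rewrite scaler_sumr.
  under [RHS]eq_bigr => k _ do rewrite scaler_sumr.
  rewrite [RHS]exchange_big /=; apply: eq_bigr => k _; apply: eq_bigr => l _.
  rewrite !scalerA [b j l * _]mulrC; congr (_ *: _).
  have -> : S :\ j :\ i = S :\ i :\ j.
    by apply/setP => x; rewrite !inE !andbA [(x != j) && _]andbC.
  by rewrite IH.
- by rewrite hb ?jS.
- by rewrite -hb ?iS.
- have -> : M i S = eS (i |: S) by rewrite ME iS.
  have -> : M j S = eS (j |: S) by rewrite ME jS.
  have ji : j != i by rewrite eq_sym.
  rewrite !eSM !ME !inE iS jS (negbTE ij) (negbTE ji) /=.
  by rewrite setUCA.
Qed.

Lemma Mm_comm i j : Mm i *m Mm j = Mm j *m Mm i.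
Proof. by apply: eqM => S; rewrite !mulmxA !eSM commS. Qed.

Lemma Mm_sq i : Mm i *m Mm i = \sum_j b i j *: Mm j.
Proof.
apply: eqM => S; rewrite mulmxA eSM mulmx_sumr.
under [RHS]eq_bigr => j _ do rewrite -scalemxAr eSM.
case iS: (i \in S).
- rewrite ME iS sum_mul; apply: eq_bigr => j _; congr (_ *: _).
  rewrite commS ME !inE eqxx /= -eSM; congr (eS _ *m _).
  by rewrite setD1K.
- rewrite ME iS eSM ME setU11; apply: eq_bigr => j _; congr (_ *: M j _).
  apply/setP => x; rewrite !inE; case: (eqVneq x i) => // ->.
  by rewrite iS.
Qed.

Lemma eS_neq0 S : eS S != 0.
Proof.
apply/negP => /eqP/rowP/(_ (enum_rank S)); rewrite !mxE !eqxx /= => /eqP.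
by rewrite oner_eq0.
Qed.

Lemma Mm_neq0 i : Mm i != 0.
Proof.
apply/negP => /eqP h; have := eSM set0 i; rewrite h mulmx0 ME inE => /esym/eqP.
by apply/negP; apply: eS_neq0.
Qed.

End Construct.

Section Kill.
Variables (F : fieldType) (n : nat) (I : finType) (A : I -> 'M[F]_n).
Hypothesis comm : forall i j, A i *m A j = A j *m A i.

Lemma stable_pow (U : 'M[F]_n) B k : (U *m B <= U)%MS -> (U *m B ^+ k <= U)%MS.
Proof.
move=> h; elim: k => [|k IH]; first by rewrite expr0 mulmx1.
by rewrite exprSr -mulmxE mulmxA; apply: submx_trans (submxMr _ IH) h.
Qed.

Lemma kill_seq (W : 'M[F]_n) (s : seq I) :
  (forall i, exists r, A i ^+ r = 0) -> (forall j, (W *m A j <= W)%MS) ->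
  (W <= \sum_(j <- s) (W *m A j))%MS -> (W <= (0 : 'M_n))%MS.
Proof.
move=> nil hinv; elim: s => [|i s IH] hW; first by rewrite big_nil in hW.
rewrite big_cons in hW.
set U := (\sum_(j <- s) (W *m A j))%MS in hW *.
have hU : (U *m A i <= U)%MS.
  rewrite /U; clear IH hW U; elim: s => [|j s IHs]; first by rewrite big_nil mul0mx.
  rewrite big_cons addsmxMr addsmxS //.
  by rewrite -mulmxA -comm mulmxA submxMr.
have claim : forall k, (W <= W *m A i ^+ k + U)%MS.
  elim=> [|k IHk]; first by rewrite expr0 mulmx1 addsmxSl.
  apply: submx_trans IHk _; rewrite addsmx_sub addsmxSr andbT.
  have := submxMr (A i ^+ k) hW; rewrite addsmxMr -mulmxA mulmxE -exprS -mulmxE.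
  move/submx_trans; apply; apply: addsmxS => //; exact: stable_pow.
apply: IH; have [r hr] := nil i; have := claim r; by rewrite hr mulmx0 adds0mx.
Qed.

Lemma kill : (forall i, exists r, A i ^+ r = 0) ->
  (forall i, (A i <= \sum_j (A j *m A j))%MS) -> forall i, A i = 0.
Proof.
move=> nil h i.
set W := (\sum_j A j)%MS.
have hinv : forall j, (W *m A j <= W)%MS.
  move=> j; rewrite sumsmxMr; apply/sumsmx_subP => k _; rewrite -comm.
  apply: submx_trans (submxMl _ _) _; exact: (sumsmx_sup k).
have hW : (W <= \sum_(j <- enum I) (W *m A j))%MS.
  rewrite big_enum /=; apply/sumsmx_subP => k _; apply: submx_trans (h k) _.
  apply/sumsmx_subP => j _; apply: (sumsmx_sup j) => //; apply: submxMr.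
  exact: (sumsmx_sup j).
have W0 := kill_seq nil hinv hW.
apply/eqP; rewrite -submx0; apply: submx_trans W0; exact: (sumsmx_sup i).
Qed.
End Kill.

Lemma nonnil_eig (C : closedFieldType) n (A : 'M[C]_n) :
  (forall r, A ^+ r != 0) -> exists2 mu, mu != 0 & eigenvalue A mu.
Proof.
case: n A => [|n] A h.
  by have := h 1%N; rewrite expr1 flatmx0 eqxx.
apply: NNPP => hn.
have z0 : forall z, eigenvalue A z -> z = 0.
  move=> z ez; apply: NNPP => nz; apply: hn; exists z => //; exact/eqP.
have [r hr] := closed_field_poly_normal (char_poly A).
rewrite (monicP (char_poly_monic A)) scale1r in hr.
have rz : forall z, z \in r -> z = 0.
  move=> z zr; apply: z0; rewrite eigenvalue_root_char hr root_prod_XsubC //.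
have : char_poly A = 'X ^+ size r.
  rewrite hr (eq_big_seq (fun=> 'X)); last by move=> z /rz ->; rewrite subr0.
  by rewrite big_const_seq count_predT; elim: (size r) => //= k ->; rewrite exprS.
move=> e; have := Cayley_Hamilton A; rewrite e rmorphXn /= horner_mx_X => e2.
by have := h (size r); rewrite e2 eqxx.
Qed.

Lemma common_eig_in (C : numClosedFieldType) n (I : finType) (A : I -> 'M[C]_n)
  (comm : forall i j, A i *m A j = A j *m A i) (W : 'M[C]_n) :
  W != 0 -> (forall j, (W *m A j <= W)%MS) ->
  exists v : 'rV_n, [/\ v != 0, (v <= W)%MS & forall j, exists a, v *m A j = a *: v].
Proof.
move=> W0 hst.
set V := row_base W.
have stV : forall j, stablemx V (A j) by move=> j; rewrite stablemx_row_base; apply: hst.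
have r0 : (0 < \rank W)%N by rewrite lt0n mxrank_eq0.
have hc : {in [seq conjmx V (A j) | j <- enum I] &, forall X Y, comm_mx X Y}.
  move=> X Y /mapP [i _ ->] /mapP [j _ ->]; rewrite /comm_mx.
  by rewrite -!conjmxM ?inE ?stV // comm.
have [y y0 hy] := common_eigenvector r0 hc.
exists (y *m V); split.
- by rewrite mulmx_free_eq0 ?row_base_free.
- by rewrite -(eq_row_base W) submxMl.
- move=> j; have /allP /(_ (conjmx V (A j))) := hy.
  have hm : conjmx V (A j) \in [seq conjmx V (A j) | j <- enum I].
    by apply/mapP; exists j; rewrite ?mem_enum.
  move/(_ hm) => /sub_rVP [a ha].
  exists a; rewrite -mulmxA -(mulmxKpV (stV j)) -/(conjmx V (A j)) mulmxA ha.
  by rewrite scalemxAl.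
Qed.

Lemma scale_inj (C : fieldType) n (v : 'rV[C]_n) a c :
  v != 0 -> a *: v = c *: v -> a = c.
Proof.
move=> v0 e; apply/eqP; rewrite -subr_eq0.
have : (a - c) *: v == 0 by rewrite scalerBl e subrr.
by rewrite scaler_eq0 (negbTE v0) orbF.
Qed.

Theorem exists_sol (C : numClosedFieldType) (I : finType) (b beta : I -> I -> C) :
  (forall i l, \sum_j beta i j * b j l = (i == l)%:R) -> forall i0 : I,
  exists t : I -> C, (forall i, t i ^+ 2 = \sum_j b i j * t j) /\ exists i, t i != 0.
Proof.
move=> hinv i0.
set A := Mm b.
have comm : forall i j, A i *m A j = A j *m A i by move=> i j; apply: Mm_comm.
have sq : forall i, A i *m A i = \sum_j b i j *: A j by move=> i; apply: Mm_sq.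
have rel : forall i, A i = \sum_j beta i j *: (A j *m A j).
  move=> i.
  under [RHS]eq_bigr => j _ do rewrite sq scaler_sumr.
  rewrite exchange_big /=.
  under eq_bigr => l _ do under eq_bigr => j _ do rewrite scalerA.
  under eq_bigr => l _ do rewrite -scaler_suml hinv.
  rewrite (bigD1 i) //= eqxx scale1r big1 ?addr0 // => l /negPf.
  by rewrite eq_sym => ->; rewrite scale0r.
have rel' : forall i, (A i <= \sum_j (A j *m A j))%MS.
  move=> i; rewrite [X in (X <= _)%MS]rel; apply: summx_sub => j _.
  by rewrite scalemx_sub // (sumsmx_sup j).
have [[i hi]|H] := classic (exists i, forall r, A i ^+ r != 0); last first.
  have nil : forall i, exists r, A i ^+ r = 0.
    move=> i; apply: NNPP => hn; apply: H; exists i => r; apply/eqP => e.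
    by apply: hn; exists r.
  by have := Mm_neq0 b i0; rewrite -/A (kill comm nil rel' i0) eqxx.
have [mu mu0 emu] := nonnil_eig hi.
set W := eigenspace (A i) mu.
have Wst : forall j, (W *m A j <= W)%MS.
  move=> j; apply/eigenspaceP; rewrite -mulmxA -comm mulmxA.
  have /eigenspaceP -> : (W <= eigenspace (A i) mu)%MS by [].
  by rewrite scalemxAl.
have [v [v0 vW hv]] := common_eig_in comm emu Wst.
have [t ht] := fin_all_exists hv.
exists t; split; last first.
  have tmu : t i = mu.
    by apply: (scale_inj v0); rewrite -ht; apply/eigenspaceP.
  by exists i; rewrite tmu.
move=> j; apply: (scale_inj v0).
have -> : t j ^+ 2 *: v = v *m (A j *m A j).
  by rewrite mulmxA ht -scalemxAl ht scalerA expr2.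
rewrite sq mulmx_sumr scaler_suml; apply: eq_bigr => k _.
by rewrite -scalemxAr ht scalerA.
Qed.

Lemma quad_root (C : numClosedFieldType) (bb c : C) : bb != 0 ->
  exists x : C, x != 0 /\ x ^+ 2 = bb * x + c.
Proof.
move=> b0; have [->|c0] := eqVneq c 0.
  by exists bb; split => //; rewrite addr0 expr2.
set s := sqrtC (bb ^+ 2 + 4 * c).
have hs : s ^+ 2 = bb ^+ 2 + 4 * c by rewrite sqrtCK.
have ce : c = (s ^+ 2 - bb ^+ 2) / 4.
  by rewrite hs; field.
have e : ((bb + s) / 2) ^+ 2 = bb * ((bb + s) / 2) + c.
  by rewrite ce; field.
exists ((bb + s) / 2); split => //.
apply: contra_neq c0 => x0; move: e; rewrite x0 expr2 !mul0r mulr0 add0r.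
by move=> ->.
Qed.

Theorem exists_nc (C : numClosedFieldType) (I : finType) (b beta : I -> I -> C) :
  (forall i l, \sum_j beta i j * b j l = (i == l)%:R) -> (1 < #|I|)%N ->
  exists t : I -> C, (forall i, t i ^+ 2 = \sum_j b i j * t j) /\
    exists p q, [/\ p != q, t p != 0 & t q != 0].
Proof.
move=> hinv cI.
have [i0 _] : exists i0 : I, i0 \in I by apply/card_gt0P; apply: ltnW.
have [t [ht [k tk]]] := exists_sol hinv i0.
case: (boolP [exists p, exists q, (p != q) && (t p != 0) && (t q != 0)]).
  move=> /existsP [p /existsP [q /andP [/andP [pq tp] tq]]].
  by exists t; split => //; exists p, q.
move=> hno.
have tj0 : forall j, j != k -> t j = 0.
  move=> j jk; apply/eqP; apply: contraNT hno => tj.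
  by apply/existsP; exists j; apply/existsP; exists k; rewrite jk tj tk.
have sumk : forall i, \sum_j b i j * t j = b i k * t k.
  move=> i; rewrite (bigD1 k) //= big1 ?addr0 // => j jk.
  by rewrite tj0 ?mulr0.
have bjk : forall j, j != k -> b j k = 0.
  move=> j jk; have := ht j; rewrite sumk tj0 // expr2 mulr0 => /esym/eqP.
  by rewrite mulf_eq0 (negbTE tk) orbF => /eqP.
have bkk : b k k = t k.
  have := ht k; rewrite sumk expr2 => /(mulIf tk) //.
have bk0 : b k k != 0 by rewrite bkk.
have betak : forall i, i != k -> beta i k = 0.
  move=> i ik; have := hinv i k; rewrite (negbTE ik) (bigD1 k) //= big1.
    by rewrite addr0 => /eqP; rewrite mulf_eq0 (negbTE bk0) orbF => /eqP.
  by move=> j jk; rewrite bjk ?mulr0.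
pose A := [pred j | j != k].
pose I' := {x in A}.
have [j1 j1A] : exists j1, j1 \in A.
  apply/card_gt0P; have := cardC1 k; rewrite /A.
  have -> : #|predC1 k| = #|[pred j | j != k]| by apply: eq_card.
  by move=> ->; rewrite -ltnS (ltn_predK cI).
pose y0 : I' := Sub j1 j1A.
pose b' (x y : I') := b (val x) (val y).
pose beta' (x y : I') := beta (val x) (val y).
have sub_sum : forall F : I -> C, \sum_j F j = F k + \sum_(y : I') F (val y).
  by move=> F; rewrite (bigD1 k) //= (big_sub A).
have hinv' : forall x z, \sum_y beta' x y * b' y z = (x == z)%:R.
  move=> x z; have := hinv (val x) (val z); rewrite sub_sum betak ?mul0r ?add0r.
    by rewrite /beta' /b' (inj_eq val_inj).
  exact: (valP x).
have [t' [ht' [j0 tj0']]] := exists_sol hinv' y0.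
pose c := \sum_(y : I') b k (val y) * t' y.
have [x [x0 hx]] := quad_root c bk0.
pose t2 (j : I) := if j == k then x else t' (insubd y0 j).
have t2v : forall y : I', t2 (val y) = t' y.
  move=> y; rewrite /t2; have := valP y; rewrite inE => /negbTE ->.
  by rewrite valKd.
have sum2 : forall i, \sum_j b i j * t2 j = b i k * x + \sum_(y : I') b i (val y) * t' y.
  move=> i; rewrite sub_sum /t2 eqxx; congr (_ + _); apply: eq_bigr => y _.
  by rewrite -/(t2 _) t2v.
exists t2; split.
  move=> i; rewrite sum2; case: (eqVneq i k) => [->|ik].
    by rewrite /t2 eqxx hx.
  rewrite bjk // mul0r add0r /t2 (negbTE ik).
  have := ht' (insubd y0 i); rewrite /b' insubdK //.
exists k, (val j0); split.
- by have := valP j0; rewrite inE eq_sym.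
- by rewrite /t2 eqxx.
- by rewrite t2v.
Qed.

Section Bil.
Variables (K : fieldType) (V : vectType K) (mul : V -> V -> V).
Hypothesis bil : bilinear_mul mul.

Lemma bmul0l z : mul 0 z = 0.
Proof.
have := bil.1 1 0 0 z; rewrite scaler0 addr0 scale1r => h.
by apply: (addrI (mul 0 z)); rewrite addr0 -h.
Qed.
Lemma bmul0r z : mul z 0 = 0.
Proof.
have := bil.2 1 z 0 0; rewrite scaler0 addr0 scale1r => h.
by apply: (addrI (mul z 0)); rewrite addr0 -h.
Qed.
Lemma bmulDl x y z : mul (x + y) z = mul x z + mul y z.
Proof. by have := bil.1 1 x y z; rewrite !scale1r. Qed.
Lemma bmulDr x y z : mul z (x + y) = mul z x + mul z y.
Proof. by have := bil.2 1 z x y; rewrite !scale1r. Qed.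
Lemma bmulZl a x z : mul (a *: x) z = a *: mul x z.
Proof. by have := bil.1 a x 0 z; rewrite addr0 bmul0l addr0. Qed.
Lemma bmulZr a x z : mul z (a *: x) = a *: mul z x.
Proof. by have := bil.2 a z x 0; rewrite addr0 bmul0r addr0. Qed.
Lemma bmul_suml (J : finType) (F : J -> V) z :
  mul (\sum_j F j) z = \sum_j mul (F j) z.
Proof. exact: (big_morph (fun x => mul x z) (fun x y => bmulDl x y z) (bmul0l z)). Qed.
Lemma bmul_sumr (J : finType) (F : J -> V) z :
  mul z (\sum_j F j) = \sum_j mul z (F j).
Proof. exact: (big_morph (fun x => mul z x) (fun x y => bmulDr x y z) (bmul0r z)). Qed.

Lemma prod_formula (s : seq V) (a c : 'I_(size s) -> K) :
  natural_family mul s ->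
  mul (\sum_i a i *: s`_i) (\sum_j c j *: s`_j) =
  \sum_k (a k * c k) *: mul s`_k s`_k.
Proof.
move=> nat; rewrite bmul_suml; apply: eq_bigr => i _.
rewrite bmulZl bmul_sumr (bigD1 i) //= big1 ?addr0.
  by rewrite bmulZr scalerA.
move=> j ji; rewrite bmulZr nat ?scaler0 //.
by rewrite eq_sym.
Qed.
End Bil.

Lemma nth_mktuple0 (T : Type) (x0 : T) n (F : 'I_n -> T) (k : 'I_n) :
  nth x0 [tuple F i | i < n] k = F k.
Proof. by rewrite -(tnth_nth x0) tnth_mktuple. Qed.

Theorem main_gen (K : numClosedFieldType) (V : vectType K) (mul : V -> V -> V) :
  (1 < \dim (@fullv _ V))%N ->
  evolution_algebra mul -> regular mul -> ~ complete mul.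
Proof.
move=> hdim [bil [s [sb snat]]] hreg hcomp.
pose n := size s.
pose e := in_tuple s.
have dimn : \dim (@fullv _ V) = n by apply: (size_basis (X := e)).
pose sq (k : 'I_n) := mul s`_k s`_k.
pose e2 := [tuple sq k | k < n].
have e2E : forall k : 'I_n, e2`_k = sq k by move=> k; apply: nth_mktuple0.
have formula : forall x y, mul x y = \sum_k (coord e k x * coord e k y) *: e2`_k.
  move=> x y; rewrite {1}(coord_basis (X := e) sb (memvf x)).
  rewrite {1}(coord_basis (X := e) sb (memvf y)) prod_formula //.
  by apply: eq_bigr => k _; rewrite e2E.
have e2b : basis_of fullv e2.
  rewrite basisEdim size_tuple dimn leqnn andbT.
  have <- : <<e2>>%VS = fullv.
    apply: hreg => x y; rewrite formula; apply: memv_suml => k _.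
    by apply: memvZ; apply: memv_span; apply: mem_nth; rewrite size_tuple.
  exact: subvv.
have e2f : free e2 := basis_free e2b.
have ef : free e := basis_free sb.
pose b (k j : 'I_n) := coord e2 k s`_j.
pose beta (i j : 'I_n) := coord e i e2`_j.
have hinv : forall i l, \sum_j beta i j * b j l = (i == l)%:R.
  move=> i l; have := coord_free l i ef; rewrite eq_sym => <-.
  rewrite (coord_basis (X := e2) e2b (memvf s`_l)) linear_sum.
  by apply: eq_bigr => j _; rewrite linearZ /= mulrC.
have cn : (1 < #|'I_n|)%N by rewrite card_ord -dimn.
have [t [ht [p [q [pq tp tq]]]]] := exists_nc hinv cn.
pose u := \sum_j t j *: s`_j.
have cu : forall k, coord e k u = t k by move=> k; apply: coord_sum_free.
have uu : mul u u = u.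
  rewrite formula.
  under eq_bigr => k _ do rewrite cu -expr2 ht scaler_suml.
  rewrite exchange_big /=; apply: eq_bigr => j _.
  rewrite [in RHS](coord_basis (X := e2) e2b (memvf s`_j)) scaler_sumr.
  by apply: eq_bigr => k _; rewrite scalerA mulrC.
have subU : subalgebra mul <[u]>%VS.
  move=> x y /vlineP [a ->] /vlineP [c ->].
  rewrite (bmulZl bil) (bmulZr bil) uu scalerA; apply: memvZ; exact: memv_line.
have [s0 [s0b _ [s' [[sb' snat'] s0s']]]] := hcomp _ subU.
have u0 : u != 0.
  by apply: contraNneq tp => u0; rewrite -cu u0 linear0.
have ss0 : size s0 = 1%N.
  by have := size_basis (X := in_tuple s0) s0b; rewrite dim_vline u0.
pose x0 := s0`_0.
have x0s0 : x0 \in s0 by apply: mem_nth; rewrite ss0.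
have [al xal] : exists al, x0 = al *: u by apply/vlineP; apply: basis_mem s0b _.
have x0n0 : x0 != 0 by apply: basis_not0 s0b _.
have al0 : al != 0 by apply: contraNneq x0n0 => a0; rewrite xal a0 scale0r.
have cx : forall k, coord e k x0 = al * t k.
  by move=> k; rewrite xal linearZ /= cu.
have cxp : coord e p x0 != 0 by rewrite cx mulf_neq0.
have cxq : coord e q x0 != 0 by rewrite cx mulf_neq0.
have x0s' : x0 \in s' by apply: s0s'.
pose m := size s'.
pose e' := in_tuple s'.
have i0m : (index x0 s' < m)%N by rewrite index_mem.
pose i0 : 'I_m := Ordinal i0m.
have si0 : s'`_i0 = x0 by apply: nth_index.
have zero : forall j : 'I_m, j != i0 -> forall k, coord e k x0 * coord e k s'`_j = 0.
  move=> j ji k.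
  have h : mul x0 s'`_j = 0.
    by rewrite -si0; apply: snat' => //; rewrite eq_sym.
  move: h; rewrite formula => h.
  by move/freeP: e2f => /(_ _ h k).
have zp : forall j : 'I_m, j != i0 -> coord e p s'`_j = 0.
  move=> j ji; have := zero j ji p; move/eqP; rewrite mulf_eq0 (negbTE cxp).
  by move/eqP.
have zq : forall j : 'I_m, j != i0 -> coord e q s'`_j = 0.
  move=> j ji; have := zero j ji q; move/eqP; rewrite mulf_eq0 (negbTE cxq).
  by move/eqP.
have ep := coord_basis (X := e') sb' (memvf s`_p).
pose g := coord e' i0 s`_p.
have h1 : coord e p s`_p = g * coord e p x0.
  rewrite {1}ep linear_sum (bigD1 i0) //= big1 ?addr0.
    by rewrite linearZ /= si0.
  by move=> j ji; rewrite linearZ /= zp ?mulr0.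
have h2 : coord e q s`_p = g * coord e q x0.
  rewrite {1}ep linear_sum (bigD1 i0) //= big1 ?addr0.
    by rewrite linearZ /= si0.
  by move=> j ji; rewrite linearZ /= zq ?mulr0.
move: h1 h2; rewrite !coord_free // eqxx (negbTE pq) => h1 /esym /eqP.
rewrite mulf_eq0 (negbTE cxq) orbF => /eqP g0.
by move: h1; rewrite g0 mul0r => /eqP; rewrite oner_eq0.
Qed.

Unset Implicit Arguments.

Theorem theorem3p2 (R : realType) (V : vectType R[i]) (mul : V -> V -> V) :
  (1 < \dim (@fullv _ V))%N ->
  evolution_algebra mul -> regular mul -> ~ complete mul.
Proof.
exact: (@main_gen R[i] V mul).
Qed.
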